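(* Under the hypotheses of Lemma 2 (stated in the context), let $\bm{U}\bm{\Sigma}\bm{V}^\top$ be the compact SVD of $\bm{X}\bm{Y}^\top$. There exists an invertible $\bm{Q}\in\mathbb{R}^{r\times r}$ with $\bm{X}=\bm{U}\bm{\Sigma}^{1/2}\bm{Q}$, $\bm{Y}=\bm{V}\bm{\Sigma}^{1/2}\bm{Q}^{-\top}$ and $\|\bm{\Sigma}_{\bm{Q}}-\bm{\Sigma}_{\bm{Q}}^{-1}\|_{\mathrm{F}}\le 8\sqrt{\kappa}\frac{p}{\lambda\sqrt{\sigma_{\min}}}\|\nabla f(\bm{X},\bm{Y})\|_{\mathrm{F}}\le 8c\sqrt{c_{\mathrm{inj}}p/\kappa}$, where $\bm{\Sigma}_{\bm{Q}}$ is the diagonal matrix of singular values of $\bm{Q}$ and $c$ is the constant in the gradient hypothesis.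
   Context: Setting: $\bm{M}^\star\in\mathbb{R}^{n\times n}$ rank $r$, nonzero singular values in $[\sigma_{\min},\sigma_{\max}]$, $\kappa=\sigma_{\max}/\sigma_{\min}$, $\bm{M}=\bm{M}^\star+\bm{E}$, $\Omega\subseteq[n]^2$, $p\in(0,1]$, $\lambda>0$, $\mathcal{P}_\Omega$ zeros entries outside $\Omega$. $f(\bm{X},\bm{Y})=\frac{1}{2p}\|\mathcal{P}_\Omega(\bm{X}\bm{Y}^\top-\bm{M})\|_{\mathrm{F}}^2+\frac{\lambda}{2p}(\|\bm{X}\|_{\mathrm{F}}^2+\|\bm{Y}\|_{\mathrm{F}}^2)$ with $\nabla_{\bm{X}}f=\frac1p[\mathcal{P}_\Omega(\bm{X}\bm{Y}^\top-\bm{M})\bm{Y}+\lambda\bm{X}]$, $\nabla_{\bm{Y}}f=\frac1p[\mathcal{P}_\Omega(\bm{X}\bm{Y}^\top-\bm{M})^\top\bm{X}+\lambda\bm{Y}]$. Hypotheses of Lemma 2: $\bm{X},\bm{Y}\in\mathbb{R}^{n\times r}$ have all singular values in $[\sqrt{\sigma_{\min}/2},\sqrt{2\sigma_{\max}}]$; $\|\mathcal{P}_\Omega(\bm{E})\|<\lambda/8$; $\|\mathcal{P}_\Omega(\bm{X}\bm{Y}^\top-\bm{M}^\star)-p(\bm{X}\bm{Y}^\top-\bm{M}^\star)\|<\lambda/8$; there is $c_{\mathrm{inj}}>0$ with $p^{-1}\|\mathcal{P}_\Omega(\bm{H})\|_{\mathrm{F}}^2\ge c_{\mathrm{inj}}\|\bm{H}\|_{\mathrm{F}}^2$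 for all $\bm{H}$ in the tangent space $\{\bm{U}\bm{A}^\top+\bm{B}\bm{V}^\top\}$ of $\bm{X}\bm{Y}^\top$; and $\|\nabla f(\bm{X},\bm{Y})\|_{\mathrm{F}}\le c\frac{\sqrt{c_{\mathrm{inj}}p}}{\kappa}\frac{\lambda}{p}\sqrt{\sigma_{\min}}$ for a sufficiently small absolute constant $c$. *)

(* Defs.v *)
From HB Require Import structures.
From mathcomp Require Import all_boot all_order all_algebra.
Set Implicit Arguments. Unset Strict Implicit. Unset Printing Implicit Defensive.
Import Order.TTheory GRing.Theory Num.Theory.
Local Open Scope ring_scope.

Section Defs.
Variable R : rcfType.

Definition frob {m k : nat} (A : 'M[R]_(m, k)) : R :=
  Num.sqrt (\sum_(i < m) \sum_(j < k) (A i j) ^+ 2).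

Definition diag_nonneg {k : nat} (D : 'M[R]_k) : Prop :=
  (forall i j : 'I_k, i != j -> D i j = 0) /\ (forall i : 'I_k, 0 <= D i i).

(* A *m D *m B^T is a (thin) singular value decomposition of X (m x k):
   A has orthonormal columns, B is orthogonal, D diagonal nonnegative;
   the singular values of X are the diagonal entries of D. *)
Definition is_svd {m k : nat} (X : 'M[R]_(m, k)) (A : 'M[R]_(m, k))
  (D : 'M[R]_k) (B : 'M[R]_k) : Prop :=
  A^T *m A = 1%:M /\ B^T *m B = 1%:M /\ diag_nonneg D /\ X = A *m D *m B^T.

Definition sv_in {m k : nat} (X : 'M[R]_(m, k)) (a b : R) : Prop :=
  exists A D B, is_svd X A D B /\ forall i, a <= D i i <= b.

Definition spec_lt {m k : nat} (X : 'M[R]_(m, k)) (t : R) : Prop :=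
  exists A D B, is_svd X A D B /\ forall i, D i i < t.

Definition is_compact_svd {m k : nat} (Z : 'M[R]_m) (U : 'M[R]_(m, k))
  (S : 'M[R]_k) (V : 'M[R]_(m, k)) : Prop :=
  U^T *m U = 1%:M /\ V^T *m V = 1%:M /\
  (forall i j : 'I_k, i != j -> S i j = 0) /\ (forall i : 'I_k, 0 < S i i) /\
  Z = U *m S *m V^T.

Definition diag_sqrt {k : nat} (S : 'M[R]_k) : 'M[R]_k :=
  \matrix_(i, j) (if i == j then Num.sqrt (S i i) else 0).

Definition POm {m : nat} (Om : {set 'I_m * 'I_m}) (A : 'M[R]_m) : 'M[R]_m :=
  \matrix_(i, j) (if (i, j) \in Om then A i j else 0).

Definition gradX {m k : nat} (Om : {set 'I_m * 'I_m}) (p lam : R)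
  (M : 'M[R]_m) (X Y : 'M[R]_(m, k)) : 'M[R]_(m, k) :=
  p^-1 *: (POm Om (X *m Y^T - M) *m Y + lam *: X).

Definition gradY {m k : nat} (Om : {set 'I_m * 'I_m}) (p lam : R)
  (M : 'M[R]_m) (X Y : 'M[R]_(m, k)) : 'M[R]_(m, k) :=
  p^-1 *: ((POm Om (X *m Y^T - M))^T *m X + lam *: Y).

Definition grad_norm {m k : nat} (Om : {set 'I_m * 'I_m}) (p lam : R)
  (M : 'M[R]_m) (X Y : 'M[R]_(m, k)) : R :=
  Num.sqrt (frob (gradX Om p lam M X Y) ^+ 2 + frob (gradY Om p lam M X Y) ^+ 2).

End Defs.

(* Main.v *)
Require Import Defs.
From HB Require Import structures.
From mathcomp Require Import all_boot all_order all_algebra.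
From mathcomp Require Import ring lra.
Import Order.TTheory GRing.Theory Num.Theory.
Set Implicit Arguments. Unset Strict Implicit. Unset Printing Implicit Defensive.
Local Open Scope ring_scope.

Section H.
Variable R : rcfType.

Definition frob2 {m k : nat} (M : 'M[R]_(m, k)) : R := \sum_i \sum_j M i j ^+ 2.

Lemma frob2_ge0 m k (M : 'M[R]_(m, k)) : 0 <= frob2 M.
Proof. apply: sumr_ge0 => i _; apply: sumr_ge0 => j _; exact: sqr_ge0. Qed.

Lemma frob_sq m k (M : 'M[R]_(m, k)) : frob M ^+ 2 = frob2 M.
Proof. by rewrite /frob sqr_sqrtr // frob2_ge0. Qed.

Lemma frob2_tr m k (M : 'M[R]_(m, k)) : frob2 M = \tr (M^T *m M).
Proof.
rewrite /frob2 /mxtrace exchange_big; apply: eq_bigr => j _.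
rewrite mxE; apply: eq_bigr => i _; by rewrite mxE expr2.
Qed.

Lemma frob2_trT m k (M : 'M[R]_(m, k)) : frob2 M^T = frob2 M.
Proof. rewrite /frob2 exchange_big; apply: eq_bigr => i _; apply: eq_bigr => j _; by rewrite mxE. Qed.

Lemma diagE k (D : 'M[R]_k) : (forall i j, i != j -> D i j = 0) -> D = diag_mx (\row_i D i i).
Proof.
move=> H; apply/matrixP => i j; rewrite !mxE; case: eqVneq => [->|/H ->] //=.
all: rewrite ?mxE ?mulr1n ?mulr0n //.
Qed.

Lemma diag_mul k (d e : 'rV[R]_k) : diag_mx d *m diag_mx e = diag_mx (\row_i (d 0 i * e 0 i)).
Proof.
apply/matrixP => i j; rewrite mul_diag_mx !mxE; case: eqVneq => [->|_] /=.
  by rewrite !mulr1n.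
by rewrite !mulr0n mulr0.
Qed.

Lemma quad_diag m k (H : 'M[R]_(m, k)) (e : 'rV[R]_m) i :
  (H^T *m diag_mx e *m H) i i = \sum_l e 0 l * H l i ^+ 2.
Proof.
rewrite mul_mx_diag mxE; apply: eq_bigr => l _; rewrite !mxE; ring.
Qed.

Lemma gram_diag m k (H : 'M[R]_(m, k)) i : (H^T *m H) i i = \sum_l H l i ^+ 2.
Proof. rewrite mxE; apply: eq_bigr => l _; rewrite !mxE; ring. Qed.

Lemma diag_le_frob2 k (M : 'M[R]_k) : \sum_i M i i ^+ 2 <= frob2 M.
Proof.
apply: ler_sum => i _; rewrite (bigD1 i) //= lerDl.
apply: sumr_ge0 => j _; exact: sqr_ge0.
Qed.

Lemma orth_inv k (B M : 'M[R]_k) : B^T *m B = 1%:M -> frob2 (B^T *m M *m B) = frob2 M.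
Proof.
move=> hB; have hB' : B *m B^T = 1%:M by apply: mulmx1C.
rewrite !frob2_tr !trmx_mul trmxK.
rewrite -!mulmxA (mulmxA B) hB' mul1mx mxtrace_mulC -!mulmxA hB' mulmx1.
by rewrite ?mulmxA.
Qed.

Lemma trmxB' m k (A B : 'M[R]_(m, k)) : (A - B)^T = A^T - B^T.
Proof. by apply/matrixP => i j; rewrite !mxE. Qed.

Lemma mxtraceB' k (A B : 'M[R]_k) : \tr (A - B) = \tr A - \tr B.
Proof. by rewrite /mxtrace -sumrB; apply: eq_bigr => i _; rewrite !mxE. Qed.

Lemma bessel m k l (A : 'M[R]_(m, k)) (G : 'M[R]_(m, l)) :
  A^T *m A = 1%:M -> frob2 (A^T *m G) <= frob2 G.
Proof.
move=> hA.
set H := A^T *m G.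
have h0 := frob2_ge0 (G - A *m H).
rewrite frob2_tr in h0.
have e1 : G^T *m (A *m H) = H^T *m H by rewrite mulmxA /H trmx_mul trmxK.
have e2 : (A *m H)^T *m G = H^T *m H by rewrite trmx_mul -mulmxA.
have e3 : (A *m H)^T *m (A *m H) = H^T *m H by rewrite trmx_mul -mulmxA (mulmxA A^T) hA mul1mx.
have E : (G - A *m H)^T *m (G - A *m H) = G^T *m G - H^T *m H.
  rewrite trmxB' mulmxBl !mulmxBr e1 e2 e3.
  by rewrite opprB addrA subrK.
by rewrite E mxtraceB' -!frob2_tr subr_ge0 in h0.
Qed.

Lemma tr_quad m k (H : 'M[R]_(m, k)) (e : 'rV[R]_m) :
  \tr (H^T *m diag_mx e *m H) = \sum_l e 0 l * \sum_i H l i ^+ 2.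
Proof.
rewrite /mxtrace (eq_bigr _ (fun i _ => quad_diag H e i)) exchange_big.
by apply: eq_bigr => l _; rewrite mulr_sumr.
Qed.

Lemma svd_sym k (D : 'M[R]_k) : diag_nonneg D -> D^T = D.
Proof. by case=> /diagE -> _; rewrite tr_diag_mx. Qed.

Lemma svd_upper m k l (X A : 'M[R]_(m, k)) (D B : 'M[R]_k) (G : 'M[R]_(m, l)) b :
  is_svd X A D B -> (forall i, D i i <= b) -> frob2 (X^T *m G) <= b ^+ 2 * frob2 G.
Proof.
case=> [hA [hB [hD ->]]] hb.
have DT := svd_sym hD.
case: hD => [/diagE Dd Dnn].
have DD : D *m D = diag_mx (\row_i (D i i * D i i)).
  rewrite {1 2}Dd diag_mul; congr diag_mx; apply/matrixP => i0 j; by rewrite !mxE.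
have -> : (A *m D *m B^T)^T *m G = B *m D *m (A^T *m G) by rewrite !trmx_mul trmxK DT !mulmxA.
rewrite frob2_tr.
have hH := bessel G hA. move: (A^T *m G) hH => H hH.
have -> : (B *m D *m H)^T *m (B *m D *m H) = H^T *m diag_mx (\row_i (D i i * D i i)) *m H.
  rewrite !trmx_mul DT -!mulmxA (mulmxA B^T) hB mul1mx (mulmxA D D) DD.
  by [].
rewrite tr_quad.
apply: (@le_trans _ _ (b ^+ 2 * frob2 H)); last first.
  by apply: ler_wpM2l; [exact: sqr_ge0 | exact: hH].
rewrite /frob2 mulr_sumr; apply: ler_sum => i _; rewrite mxE.
apply: ler_wpM2r; first by apply: sumr_ge0 => j _; exact: sqr_ge0.
have := Dnn i; have := hb i; nra.
Qed.

Lemma svd_lower m k l (X A : 'M[R]_(m, k)) (D B : 'M[R]_k) (Z : 'M[R]_(k, l)) a i :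
  is_svd X A D B -> 0 <= a -> (forall i, a <= D i i) ->
  a ^+ 2 * (Z^T *m Z) i i <= (Z^T *m (X^T *m X) *m Z) i i.
Proof.
case=> [hA [hB [hD ->]]] ha hb.
have DT := svd_sym hD.
case: hD => [/diagE Dd Dnn].
have DD : D *m D = diag_mx (\row_i (D i i * D i i)).
  rewrite {1 2}Dd diag_mul; congr diag_mx; apply/matrixP => i0 j; by rewrite !mxE.
have hB' : B *m B^T = 1%:M by apply: mulmx1C.
have -> : Z^T *m ((A *m D *m B^T)^T *m (A *m D *m B^T)) *m Z = (B^T *m Z)^T *m diag_mx (\row_i (D i i * D i i)) *m (B^T *m Z).
  rewrite !trmx_mul !trmxK DT.
  rewrite -!mulmxA (mulmxA A^T) hA mul1mx (mulmxA D D) DD.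
  by [].
have -> : Z^T *m Z = (B^T *m Z)^T *m (B^T *m Z) by rewrite trmx_mul trmxK mulmxA -(mulmxA Z^T) hB' mulmx1.
rewrite quad_diag gram_diag mulr_sumr; apply: ler_sum => j _; rewrite mxE.
apply: ler_wpM2r; first exact: sqr_ge0.
rewrite mxE; have := Dnn j; have := hb j; nra.
Qed.

Lemma key_scalar (a b w d s : R) : 0 < d -> 0 <= s -> s <= a -> s <= b ->
  a = d * w * d -> b = d^-1 * w * d^-1 ->
  4 * s ^+ 2 * (d - d^-1) ^+ 2 <= (a - b) ^+ 2.
Proof.
move=> d0 s0 sa sb ea eb.
set e := d^-1.
have de : d * e = 1 by rewrite /e mulfV // gt_eqF.
have e0 : 0 < e by rewrite /e invr_gt0.
have w0 : 0 <= w.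
  have wa : w = e * e * a.
    rewrite ea; transitivity ((d * e) * (d * e) * w); first by rewrite de !mul1r.
    ring.
  rewrite wa; apply: mulr_ge0; first by apply: mulr_ge0; apply: ltW.
  by apply: le_trans sa.
have ww : s ^+ 2 <= w ^+ 2.
  have : s * s <= a * b by apply: ler_pM.
  have -> : a * b = w ^+ 2.
    rewrite ea eb -/e; transitivity ((d * e) * (d * e) * w ^+ 2); first ring.
    by rewrite de !mul1r.
  by rewrite -expr2.
have sw : s <= w by rewrite -(ler_pXn2r (_ : 0 < 2)%N) // ?nnegrE.
have -> : a - b = w * (d - e) * (d + e) by rewrite ea eb -/e; ring.
have h4 : 4 <= (d + e) ^+ 2.
  have -> : (d + e) ^+ 2 = (d - e) ^+ 2 + 4 * (d * e) by ring.
  by rewrite de mulr1 lerDr sqr_ge0.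
have h1 : 0 <= (d - e) ^+ 2 by exact: sqr_ge0.
rewrite !exprMn.
have : s ^+ 2 * 4 <= w ^+ 2 * (d + e) ^+ 2 by apply: ler_pM => //; exact: sqr_ge0.
nra.
Qed.

Lemma gram_unit m k (X A : 'M[R]_(m, k)) (D B : 'M[R]_k) :
  is_svd X A D B -> (forall i, 0 < D i i) -> X^T *m X \in unitmx.
Proof.
case=> [hA [hB [hD ->]]] hp.
have DT := svd_sym hD.
case: hD => [/diagE Dd Dnn].
have hB' : B *m B^T = 1%:M by apply: mulmx1C.
set iD := diag_mx (\row_i (D i i * D i i)^-1).
have DD : D *m D *m iD = 1%:M.
  rewrite {1 2}Dd !diag_mul; apply/matrixP => i j; rewrite !mxE; case: eqVneq => [->|_] //=.
  by rewrite !mulr1n mulfV // mulf_neq0 // gt_eqF.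
have : (A *m D *m B^T)^T *m (A *m D *m B^T) *m (B *m iD *m B^T) = 1%:M.
  rewrite !trmx_mul !trmxK DT -!mulmxA (mulmxA A^T) hA mul1mx (mulmxA B^T) hB mul1mx.
  by rewrite (mulmxA D D) (mulmxA (D *m D) iD) DD mul1mx hB'.
by case/mulmx1_unit.
Qed.

Lemma frob2Z m k (a : R) (M : 'M[R]_(m, k)) : frob2 (a *: M) = a ^+ 2 * frob2 M.
Proof.
rewrite /frob2 mulr_sumr; apply: eq_bigr => i _; rewrite mulr_sumr; apply: eq_bigr => j _.
by rewrite mxE exprMn.
Qed.

Lemma frob2B_le m k (M N : 'M[R]_(m, k)) : frob2 (M - N) <= 2 * frob2 M + 2 * frob2 N.
Proof.
rewrite /frob2 !mulr_sumr -big_split /=; apply: ler_sum => i _.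
rewrite !mulr_sumr -big_split /=; apply: ler_sum => j _.
rewrite !mxE; have := sqr_ge0 (M i j + N i j); nra.
Qed.

Lemma frob2_diag k (M : 'M[R]_k) : (forall i j, i != j -> M i j = 0) ->
  frob2 M = \sum_i M i i ^+ 2.
Proof.
move=> H; apply: eq_bigr => i _; rewrite (bigD1 i) //= big1 ?addr0 // => j /negP ji.
by rewrite H ?expr0n // eq_sym; apply/negP.
Qed.

Lemma sandwich k (e : 'rV[R]_k) (W : 'M[R]_k) i :
  (diag_mx e *m W *m diag_mx e) i i = e 0 i * W i i * e 0 i.
Proof. by rewrite mul_mx_diag mul_diag_mx !mxE. Qed.

Lemma trmxD' m k (A B : 'M[R]_(m, k)) : (A + B)^T = A^T + B^T.
Proof. by apply/matrixP => i j; rewrite !mxE. Qed.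

Lemma trmxZ' m k (a : R) (A : 'M[R]_(m, k)) : (a *: A)^T = a *: A^T.
Proof. by apply/matrixP => i j; rewrite !mxE. Qed.

Lemma mxBE m k (A B : 'M[R]_(m, k)) i j : (A - B) i j = A i j - B i j.
Proof. by rewrite !mxE. Qed.

Lemma T_id (sk ss p lam g : R) : ss != 0 -> lam != 0 ->
  (ss ^+ 2) ^+ 2 * (8 * sk * p / (lam * ss) * g) ^+ 2 =
  16 * ((p / lam) ^+ 2 * (4 * (sk ^+ 2 * ss ^+ 2) * g ^+ 2)).
Proof. by move=> h1 h2; field; rewrite ?h1 ?h2. Qed.

Lemma S_id (sk ss p lam c x : R) : sk != 0 -> ss != 0 -> lam != 0 -> p != 0 ->
  8 * sk * p / (lam * ss) * (c * x / sk ^+ 2 * (lam / p) * ss) = 8 * c * (x / sk).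
Proof. by move=> h1 h2 h3 h4; field; rewrite ?h1 ?h2 ?h3 ?h4. Qed.
End H.
Unset Implicit Arguments.

Theorem claim3 :
  exists c0 : rat, 0 < c0 /\
  forall (R : rcfType) (c : R), 0 < c <= ratr c0 ->
  forall (n r : nat) (Mstar E : 'M[R]_n) (smin smax p lam cinj : R)
         (Om : {set 'I_n * 'I_n}) (X Y : 'M[R]_(n, r))
         (U V : 'M[R]_(n, r)) (S : 'M[R]_r),
  (* standing setting *)
  0 < smin -> smin <= smax ->
  \rank Mstar = r ->
  (exists A D B, is_svd Mstar A D B /\
     forall i, D i i != 0 -> smin <= D i i <= smax) ->
  0 < p <= 1 -> 0 < lam ->
  (* hypotheses of Lemma 2 *)
  sv_in X (Num.sqrt (smin / 2)) (Num.sqrt (2 * smax)) ->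
  sv_in Y (Num.sqrt (smin / 2)) (Num.sqrt (2 * smax)) ->
  spec_lt (POm Om E) (lam / 8) ->
  spec_lt (POm Om (X *m Y^T - Mstar) - p *: (X *m Y^T - Mstar)) (lam / 8) ->
  (* compact SVD of X Y^T *)
  is_compact_svd (X *m Y^T) U S V ->
  0 < cinj ->
  (forall Ah Bh : 'M[R]_(n, r),
     p^-1 * frob (POm Om (U *m Ah^T + Bh *m V^T)) ^+ 2 >=
       cinj * frob (U *m Ah^T + Bh *m V^T) ^+ 2) ->
  grad_norm Om p lam (Mstar + E) X Y <=
    c * Num.sqrt (cinj * p) / (smax / smin) * (lam / p) * Num.sqrt smin ->
  (* conclusion *)
  exists Q : 'M[R]_r,
    Q \in unitmx /\
    X = U *m diag_sqrt S *m Q /\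
    Y = V *m diag_sqrt S *m (invmx Q)^T /\
    forall (A : 'M[R]_r) (SQ : 'M[R]_r) (B : 'M[R]_r), is_svd Q A SQ B ->
      frob (SQ - invmx SQ) <=
        8 * Num.sqrt (smax / smin) * p / (lam * Num.sqrt smin)
          * grad_norm Om p lam (Mstar + E) X Y
      /\ 8 * Num.sqrt (smax / smin) * p / (lam * Num.sqrt smin)
          * grad_norm Om p lam (Mstar + E) X Y
         <= 8 * c * Num.sqrt (cinj * p / (smax / smin)).
Proof.
exists 1%Q; split; first by [].
move=> R c /andP[c0 c1] n r Mstar E smin smax p lam cinj Om X Y U V S hsmin hsle _ _
  /andP[p0 p1] hlam [AX [DX [BX [svdX bX]]]] [AY [DY [BY [svdY bY]]]] _ _
  [hU [hV [Soff [Spos hXY]]]] hcinj _ hgrad.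
set s2 := diag_sqrt S.
have Sd := diagE Soff.
have s2E : s2 = diag_mx (\row_i Num.sqrt (S i i)).
  apply/matrixP => i j; rewrite !mxE; case: eqVneq => [->|_] /=; by rewrite ?mulr1n ?mulr0n.
have s2s2 : s2 *m s2 = S.
  rewrite s2E diag_mul {3}Sd; congr diag_mx; apply/matrixP => i j; rewrite !mxE.
  by rewrite -expr2 sqr_sqrtr // ltW.
have s2T : s2^T = s2 by rewrite s2E tr_diag_mx.
have ST : S^T = S by rewrite Sd tr_diag_mx.
have s2u : s2 \in unitmx.
  rewrite unitmxE s2E det_diag unitfE; apply/prodf_neq0 => i _; rewrite mxE.
  by rewrite gt_eqF // sqrtr_gt0.
have hs0 : 0 < Num.sqrt (smin / 2) by rewrite sqrtr_gt0 divr_gt0.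
have XtXu : X^T *m X \in unitmx.
  apply: (gram_unit svdX) => i; have /andP[h _] := bX i; exact: lt_le_trans h.
have YtYu : Y^T *m Y \in unitmx.
  apply: (gram_unit svdY) => i; have /andP[h _] := bY i; exact: lt_le_trans h.
have hXU : X = U *m (U^T *m X).
  have E1 : X = X *m Y^T *m (Y *m invmx (Y^T *m Y)).
    by rewrite -mulmxA (mulmxA Y^T Y) mulmxV // mulmx1.
  rewrite E1 hXY -!mulmxA (mulmxA U^T U) hU mul1mx //.
have hYV : Y = V *m (V^T *m Y).
  have hYX : Y *m X^T = V *m S *m U^T.
    by rewrite -[Y *m X^T]trmxK trmx_mul trmxK hXY !trmx_mul trmxK ST mulmxA.
  have E1 : Y = Y *m X^T *m (X *m invmx (X^T *m X)).
    by rewrite -mulmxA (mulmxA X^T X) mulmxV // mulmx1.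
  rewrite E1 hYX -!mulmxA (mulmxA V^T V) hV mul1mx //.
set Q := invmx s2 *m (U^T *m X).
have hQ1 : Q *m (Y^T *m V *m invmx s2) = 1%:M.
  rewrite /Q -!mulmxA (mulmxA X) (mulmxA (X *m Y^T)) hXY -!mulmxA (mulmxA U^T U) hU mul1mx.
  rewrite (mulmxA V^T) hV mul1mx -s2s2 -!mulmxA (mulmxA (invmx s2)) mulVmx // mul1mx mulmxV //.
have Qu : Q \in unitmx by case: (mulmx1_unit hQ1).
have iQ : invmx Q = Y^T *m V *m invmx s2.
  by have := mulKmx Qu (Y^T *m V *m invmx s2); rewrite hQ1 mulmx1.
have hXQ : X = U *m s2 *m Q.
  by rewrite /Q -mulmxA (mulmxA s2) mulmxV // mul1mx -hXU.
have hYQ : Y = V *m s2 *m (invmx Q)^T.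
  rewrite iQ !trmx_mul trmxK trmx_inv s2T -mulmxA (mulmxA s2) mulmxV // mul1mx.
  exact: hYV.
exists Q; split; first exact: Qu.
split; first exact: hXQ.
split; first exact: hYQ.
move=> A SQ B [hA [hB [hSQ hQe]]].
set G1 := gradX Om p lam (Mstar + E) X Y.
set G2 := gradY Om p lam (Mstar + E) X Y.
have hg2 : grad_norm Om p lam (Mstar + E) X Y ^+ 2 = frob2 G1 + frob2 G2.
  by rewrite /grad_norm sqr_sqrtr ?addr_ge0 ?sqr_ge0 // !frob_sq.
have g0 : 0 <= grad_norm Om p lam (Mstar + E) X Y by exact: sqrtr_ge0.
have pn0 : p != 0 by rewrite gt_eqF.
have key : lam *: (X^T *m X - Y^T *m Y) = p *: (X^T *m G1 - G2^T *m Y).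
  rewrite /G1 /G2 /gradX /gradY.
  set P := POm Om (X *m Y^T - (Mstar + E)).
  rewrite trmxZ' trmxD' trmxZ' trmx_mul trmxK -scalemxAr -scalemxAl -scalerBr scalerA mulfV // scale1r.
  rewrite mulmxDr mulmxDl -scalemxAr -scalemxAl mulmxA.
  by rewrite opprD addrACA subrr add0r scalerBr.
have lamn0 : lam != 0 by rewrite gt_eqF.
have smax0 : 0 < smax by apply: lt_le_trans hsle.
have hM : frob2 (X^T *m X - Y^T *m Y) <= (p / lam) ^+ 2 * (4 * smax * (frob2 G1 + frob2 G2)).
  have eM : X^T *m X - Y^T *m Y = (p / lam) *: (X^T *m G1 - G2^T *m Y).
    by rewrite -[LHS]scale1r -(mulVf lamn0) -(scalerA lam^-1 lam) key !scalerA mulrC.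
  rewrite eM frob2Z; apply: ler_wpM2l; first exact: sqr_ge0.
  apply: le_trans (frob2B_le _ _) _.
  have u1 : frob2 (X^T *m G1) <= 2 * smax * frob2 G1.
    have := svd_upper G1 svdX (b := Num.sqrt (2 * smax)) (fun i => proj2 (andP (bX i))).
    by rewrite sqr_sqrtr // mulr_ge0 // ltW.
  have u2 : frob2 (G2^T *m Y) <= 2 * smax * frob2 G2.
    rewrite -frob2_trT trmx_mul trmxK.
    have := svd_upper G2 svdY (b := Num.sqrt (2 * smax)) (fun i => proj2 (andP (bY i))).
    by rewrite sqr_sqrtr // mulr_ge0 // ltW.
  have -> : 4 * smax * (frob2 G1 + frob2 G2) = 2 * (2 * smax * frob2 G1) + 2 * (2 * smax * frob2 G2) by ring.
  by apply: lerD; apply: ler_wpM2l.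
have hA' : A *m A^T = 1%:M by apply: mulmx1C.
have hB' : B *m B^T = 1%:M by apply: mulmx1C.
have SQT := svd_sym hSQ.
case: hSQ => [SQoff SQnn].
have SQd := diagE SQoff.
have Atu : A^T \in unitmx by case: (mulmx1_unit hA).
have Bu : B \in unitmx by case: (mulmx1_unit hB').
have SQe : SQ = A^T *m Q *m B.
  by rewrite hQe !mulmxA hA mul1mx -mulmxA hB mulmx1.
have SQu : SQ \in unitmx by rewrite SQe unitmx_mul Bu andbT (unitmx_mul A^T) Atu Qu.
have dn0 : forall i, SQ i i != 0.
  move=> i; apply/negP => /eqP h0; move: SQu.
  by rewrite unitmxE SQd det_diag unitfE (bigD1 i) //= mxE h0 mul0r eqxx.
have dp : forall i, 0 < SQ i i by move=> i; rewrite lt_def dn0 SQnn.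
set iD := diag_mx (\row_i (SQ i i)^-1).
have SQiD : SQ *m iD = 1%:M.
  rewrite {1}SQd diag_mul; apply/matrixP => i j; rewrite !mxE; case: eqVneq => [->|_] /=.
    by rewrite !mulr1n mulfV.
  by rewrite !mulr0n.
have iSQ : invmx SQ = iD by have := mulKmx SQu iD; rewrite SQiD mulmx1.
have iQe : invmx Q = B *m iD *m A^T.
  have h : Q *m (B *m iD *m A^T) = 1%:M.
    by rewrite hQe -!mulmxA (mulmxA B^T B) hB mul1mx (mulmxA SQ iD) SQiD mul1mx hA'.
  by have := mulKmx Qu (B *m iD *m A^T); rewrite h mulmx1.
have XtX : X^T *m X = Q^T *m S *m Q.
  rewrite {1 2}hXQ !trmx_mul s2T -!mulmxA (mulmxA U^T U) hU mul1mx (mulmxA s2 s2) s2s2.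
  by rewrite !mulmxA.
have YtY : Y^T *m Y = invmx Q *m S *m (invmx Q)^T.
  rewrite {1 2}hYQ !trmx_mul trmxK s2T -!mulmxA (mulmxA V^T V) hV mul1mx (mulmxA s2 s2) s2s2.
  by rewrite !mulmxA.
set W := A^T *m S *m A.
have P1e : B^T *m (X^T *m X) *m B = SQ *m W *m SQ.
  rewrite XtX hQe !trmx_mul trmxK SQT -!mulmxA (mulmxA B^T B) hB mul1mx mulmx1 /W.
  by rewrite -?mulmxA.
have iDT : iD^T = iD by rewrite tr_diag_mx.
have P2e : B^T *m (Y^T *m Y) *m B = iD *m W *m iD.
  rewrite YtY iQe !trmx_mul trmxK iDT -!mulmxA (mulmxA B^T B) hB mul1mx mulmx1 /W.
  by rewrite -?mulmxA.
have hs2 : Num.sqrt (smin / 2) ^+ 2 = smin / 2 by rewrite sqr_sqrtr // ltW // divr_gt0.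
have l1 : forall i, smin / 2 <= SQ i i * W i i * SQ i i.
  move=> i; have := svd_lower B i svdX (ltW hs0) (fun j => proj1 (andP (bX j))).
  rewrite hB P1e {1 2}SQd sandwich !mxE eqxx mulr1n mulr1 hs2 //.
have l2 : forall i, smin / 2 <= (SQ i i)^-1 * W i i * (SQ i i)^-1.
  move=> i; have := svd_lower B i svdY (ltW hs0) (fun j => proj1 (andP (bY j))).
  rewrite hB P2e sandwich !mxE eqxx mulr1n mulr1 hs2 //.
have hsum : smin ^+ 2 * frob2 (SQ - iD) <= frob2 (X^T *m X - Y^T *m Y).
  rewrite -(orth_inv (X^T *m X - Y^T *m Y) hB) mulmxBr mulmxBl P1e P2e.
  apply: le_trans (diag_le_frob2 _).
  rewrite frob2_diag; last first.
    by move=> i j ij; rewrite !mxE (negbTE ij) mulr0n subr0 SQoff.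
  rewrite mulr_sumr; apply: ler_sum => i _.
  have e1 : (SQ *m W *m SQ) i i = SQ i i * W i i * SQ i i by rewrite {1 2}SQd sandwich !mxE.
  have e2 : (iD *m W *m iD) i i = (SQ i i)^-1 * W i i * (SQ i i)^-1 by rewrite sandwich !mxE.
  rewrite !mxBE e1 e2 mxE eqxx mulr1n.
  have -> : smin ^+ 2 = 4 * (smin / 2) ^+ 2 by field.
  rewrite mxE.
  apply: (key_scalar (dp i) _ (l1 i) (l2 i)) => //; by rewrite divr_ge0 // ltW.
have k0 : 0 <= smax / smin by rewrite divr_ge0 // ltW.
have sk0 : 0 < Num.sqrt (smax / smin) by rewrite sqrtr_gt0 divr_gt0.
have ss0 : 0 < Num.sqrt smin by rewrite sqrtr_gt0.
have K0 : 0 <= 8 * Num.sqrt (smax / smin) * p / (lam * Num.sqrt smin).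
  by rewrite divr_ge0 ?mulr_ge0 // ltW.
rewrite iSQ; split.
  have -> : frob (SQ - iD) = Num.sqrt (frob2 (SQ - iD)) by [].
  have T0 := mulr_ge0 K0 g0.
  rewrite -(ger0_norm T0) -sqrtr_sqr ler_sqrt ?sqr_ge0 //.
  rewrite -(ler_pM2l (_ : 0 < smin ^+ 2)) ?exprn_gt0 //.
  apply: (le_trans hsum); apply: (le_trans hM).
  have := @T_id R (Num.sqrt (smax / smin)) (Num.sqrt smin) p lam (grad_norm Om p lam (Mstar + E) X Y) (negbT (gt_eqF ss0)) lamn0.
  rewrite (sqr_sqrtr k0) (sqr_sqrtr (ltW hsmin)) divfK ?gt_eqF // hg2 => ->.
  have : 0 <= (p / lam) ^+ 2 * (4 * smax * (frob2 G1 + frob2 G2)).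
    apply: mulr_ge0; first exact: sqr_ge0. apply: mulr_ge0; [apply: mulr_ge0 => //; exact: ltW | apply: addr_ge0; exact: frob2_ge0].
  lra.
apply: le_trans (ler_wpM2l K0 hgrad) _.
rewrite (sqrtrM ((smax / smin)^-1) (_ : 0 <= cinj * p)); last by rewrite mulr_ge0 // ltW.
rewrite sqrtrV //.
set sk := Num.sqrt (smax / smin).
have kE : smax / smin = sk ^+ 2 by rewrite /sk sqr_sqrtr.
rewrite kE (@S_id R sk (Num.sqrt smin) p lam c (Num.sqrt (cinj * p))) //.
- by rewrite gt_eqF.
- by rewrite gt_eqF.
Qed.
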